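(* Let $G=(V,E)$ be an undirected, unweighted graph with $|V|=n$ and $|E|=m$. Let $\varepsilon\in(0,\frac1{18}]$ and suppose that $H$ is a $(1\pm\varepsilon)$-spectral sparsifier of $G$. Then $\widehat{H}$, the unweighted version of $H$, is an $\widetilde{O}(\sqrt{m})$-spanner of $G$.
   Context: A $(1\pm\varepsilon)$-spectral sparsifier of $G$ is a weighted graph $H=(V,E_H,w)$ with $E_H\subseteq E$ and positive weights such that $(1-\varepsilon)L_H\preceq L_G\preceq(1+\varepsilon)L_H$, where $L_G=B_G^\top B_G$ ($B_G$ the edge–vertex incidence matrix), $L_H=B_H^\top WB_H$ ($W$ the diagonal matrix of edge weights), and $A\preceq B$ means $x^\top Ax\le x^\top Bx$ for all $x$. $\widehat{H}$ is the graph $(V,E_H)$ with all weights equal to $1$. A subgraph $K$ of $G$ is a $t$-spanner if $d_K(u,v)\le t\cdot d_G(u,v)$ for all $u,v\in V$ ($d$ = shortest-path distance). $\widetilde{O}(f)$ means $f\cdot\mathrm{polylog}(n)$. *)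

(* Defs.v *)
From HB Require Import structures.
From mathcomp Require Import all_boot all_order all_algebra.
From mathcomp Require Import all_classical all_reals all_analysis.
Set Implicit Arguments. Unset Strict Implicit. Unset Printing Implicit Defensive.
Import Order.TTheory GRing.Theory Num.Theory.
Local Open Scope ring_scope.

(* Vertex set V = 'I_n.  An undirected simple graph is given by its edge set
   E : {set 'I_n * 'I_n}, each undirected edge {u,v} being stored once as the
   ordered pair (u,v) with u < v. *)
Definition simple_edges (n : nat) (E : {set 'I_n * 'I_n}) : Prop :=
  forall p, p \in E -> (p.1 < p.2)%N.

Definition adj (n : nat) (E : {set 'I_n * 'I_n}) : rel 'I_n :=
  fun u v => ((u, v) \in E) || ((v, u) \in E).

Definition incmx (R : ringType) (n : nat) (E : {set 'I_n * 'I_n})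
  : 'M[R]_(#|E|, n) :=
  \matrix_(i < #|E|, j < n)
     (((j == (enum_val i).1) : nat)%:R - ((j == (enum_val i).2) : nat)%:R).

Definition wmx (R : ringType) (n : nat) (E : {set 'I_n * 'I_n})
  (w : 'I_n * 'I_n -> R) : 'M[R]_#|E| :=
  diag_mx (\row_(i < #|E|) w (enum_val i)).

Definition laplacian (R : ringType) (n : nat) (E : {set 'I_n * 'I_n})
  (w : 'I_n * 'I_n -> R) : 'M[R]_n :=
  (incmx R E)^T *m wmx E w *m incmx R E.

Definition ulaplacian (R : ringType) (n : nat) (E : {set 'I_n * 'I_n})
  : 'M[R]_n := (incmx R E)^T *m incmx R E.

Definition loewner_le (R : numDomainType) (n : nat) (A B : 'M[R]_n) : Prop :=
  forall x : 'cV[R]_n, (x^T *m A *m x) 0 0 <= (x^T *m B *m x) 0 0.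

Definition spectral_sparsifier (R : numDomainType) (n : nat)
  (E F : {set 'I_n * 'I_n}) (w : 'I_n * 'I_n -> R) (eps : R) : Prop :=
  [/\ F \subset E, (forall p, p \in F -> 0 < w p),
      loewner_le ((1 - eps) *: laplacian F w) (ulaplacian R E)
    & loewner_le (ulaplacian R E) ((1 + eps) *: laplacian F w)].

Definition dist_le (n : nat) (E : {set 'I_n * 'I_n}) (u v : 'I_n) (k : nat)
  : Prop :=
  exists p : seq 'I_n, [/\ (size p <= k)%N, path (adj E) u p & last u p = v].

(* the subgraph with edge set F is a t-spanner of the graph with edge set E:
   d_F(u,v) <= t * d_E(u,v) for all u v (with d = +oo when unreachable) *)
Definition spanner (R : numDomainType) (n : nat) (E F : {set 'I_n * 'I_n})
  (t : R) : Prop :=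
  forall (u v : 'I_n) (k : nat), dist_le E u v k ->
    exists k' : nat, k'%:R <= t * k%:R /\ dist_le F u v k'.

(* Main.v *)
Require Import Defs.
From HB Require Import structures.
From mathcomp Require Import all_boot all_order all_algebra.
From mathcomp Require Import all_classical all_reals all_analysis.
From mathcomp Require Import ring lra zify.
Import Order.TTheory GRing.Theory Num.Theory.
Local Open Scope ring_scope.

Lemma sum_ind (R : ringType) n (a : 'I_n) (f : 'I_n -> R) :
  \sum_j (((j == a) : nat)%:R * f j) = f a.
Proof.
rewrite (bigD1 a) //= eqxx mul1r big1 ?addr0 // => j /negbTE ->.
by rewrite mul0r.
Qed.

Lemma incmxE (R : ringType) n (E : {set 'I_n * 'I_n}) (x : 'cV[R]_n) i :
  (incmx R E *m x) i 0 = x (enum_val i).1 0 - x (enum_val i).2 0.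
Proof.
rewrite mxE.
under eq_bigr do rewrite mxE mulrBl.
by rewrite sumrB !sum_ind.
Qed.

Lemma qformE (R : comRingType) n (E : {set 'I_n * 'I_n}) w (x : 'cV[R]_n) :
  (x^T *m laplacian E w *m x) 0 0 =
  \sum_(e in E) w e * (x e.1 0 - x e.2 0)^+2.
Proof.
rewrite /laplacian.
have -> : x^T *m ((incmx R E)^T *m wmx E w *m incmx R E) *m x =
   (incmx R E *m x)^T *m wmx E w *m (incmx R E *m x) by rewrite trmx_mul !mulmxA.
rewrite /wmx mul_mx_diag mxE [RHS]big_enum_val /=.
apply: eq_bigr => i _; have h := @incmxE R n E x i; rewrite mxE in h; rewrite !mxE h; ring.
Qed.

Lemma uqformE (R : comRingType) n (E : {set 'I_n * 'I_n}) (x : 'cV[R]_n) :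
  (x^T *m ulaplacian R E *m x) 0 0 =
  \sum_(e in E) (x e.1 0 - x e.2 0)^+2.
Proof.
rewrite /ulaplacian.
have -> : x^T *m ((incmx R E)^T *m incmx R E) *m x =
   (incmx R E *m x)^T *m (incmx R E *m x) by rewrite trmx_mul !mulmxA.
rewrite mxE [RHS]big_enum_val /=.
apply: eq_bigr => i _; have h := @incmxE R n E x i; rewrite mxE in h; rewrite !mxE h; ring.
Qed.

Lemma qformZ (R : comRingType) n (A : 'M[R]_n) c (x : 'cV[R]_n) :
  (x^T *m (c *: A) *m x) 0 0 = c * (x^T *m A *m x) 0 0.
Proof. by rewrite -scalemxAr -scalemxAl mxE. Qed.

Lemma sum_shift (D : nat) (P Q : nat -> bool) :
  (forall j, Q j -> P j.+1) ->
  (\sum_(j < D) (~~ P j : nat) <= (\sum_(j < D) (~~ Q j : nat)).+1)%N.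
Proof.
case: D => [|D] h; first by rewrite big_ord0.
rewrite big_ord_recl big_ord_recr /=.
have : (\sum_(i < D) (~~ P (bump 0 i) : nat) <= \sum_(i < D) (~~ Q i : nat))%N.
  apply: leq_sum => i _; have := h i; rewrite /bump /= add1n.
  by case: (Q i); case: (P i.+1) => // /(_ isT).
case: (P 0%N); case: (Q D) => /=; lia.
Qed.

Lemma sq2 (R : ringType) n (a b : 'I_n) : a != b ->
  \sum_c (((a == c) : nat)%:R - ((b == c) : nat)%:R)^+2 = 2 :> R.
Proof.
move=> ab.
rewrite (bigD1 a) //= (bigD1 b) /=; last by rewrite eq_sym ab.
rewrite big1 ?addr0; last first.
  move=> c /andP [h1 h2]; rewrite ![_ == c]eq_sym (negbTE h1) (negbTE h2).
  by rewrite subrr expr2 mulr0.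
by rewrite eqxx (negbTE ab) eq_sym (negbTE ab) eqxx /= subr0 sub0r sqrrN expr1n.
Qed.

Lemma walk_lift n (E F : {set 'I_n * 'I_n}) K :
  (forall a b, adj E a b -> dist_le F a b K) ->
  forall p u, path (adj E) u p ->
  exists q, [/\ (size q <= size p * K)%N, path (adj F) u q & last u q = last u p].
Proof.
move=> h; elim=> [|b p IH] u /=.
  by move=> _; exists [::].
case/andP=> hub hp.
have [q1 [s1 p1 l1]] := h _ _ hub.
have [q2 [s2 p2 l2]] := IH _ hp.
exists (q1 ++ q2); split.
- by rewrite size_cat mulSn leq_add.
- by rewrite cat_path p1 l1 p2.
- by rewrite last_cat l1 l2.
Qed.

Lemma weight_bound (R : realType) n (E F : {set 'I_n * 'I_n}) (w : 'I_n * 'I_n -> R) eps :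
  simple_edges E -> F \subset E ->
  loewner_le ((1 - eps) *: laplacian F w) (ulaplacian R E) ->
  (1 - eps) * (\sum_(e in F) w e) <= #|E|%:R.
Proof.
move=> sE sFE hlo.
have neq : forall e, e \in E -> e.1 != e.2.
  by move=> e /sE h; rewrite neq_ltn h.
pose ec (c : 'I_n) : 'cV[R]_n := \col_z ((z == c) : nat)%:R.
have hc : forall c, (1 - eps) * \sum_(e in F) w e * (((e.1 == c) : nat)%:R - ((e.2 == c) : nat)%:R)^+2
   <= \sum_(e in E) (((e.1 == c) : nat)%:R - ((e.2 == c) : nat)%:R)^+2.
  move=> c; have := hlo (ec c); rewrite qformZ qformE uqformE.
  by under eq_bigr do rewrite !mxE; under [X in _ <= X]eq_bigr do rewrite !mxE.
have : \sum_c (1 - eps) * \sum_(e in F) w e * (((e.1 == c) : nat)%:R - ((e.2 == c) : nat)%:R)^+2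
   <= \sum_c \sum_(e in E) (((e.1 == c) : nat)%:R - ((e.2 == c) : nat)%:R)^+2.
  by apply: ler_sum => c _; exact: hc.
rewrite -mulr_sumr exchange_big [X in _ <= X]exchange_big /=.
under eq_bigr => e eF do rewrite -mulr_sumr (@sq2 R _ _ _ (neq e (fintype.subsetP sFE e eF))).
under [X in _ <= X]eq_bigr => e eE do rewrite (@sq2 R _ _ _ (neq e eE)).
rewrite -mulr_suml sumr_const -mulr_natl => h.
have h2 : 0 <= #|E|%:R :> R by apply: ler0n.
move: h; set W := \sum_(i in F) w i; set m := #|E|%:R; move=> h.
lra.
Qed.


Lemma adjC n (E : {set 'I_n * 'I_n}) a b : adj E a b = adj E b a.
Proof. by rewrite /adj orbC. Qed.

Lemma edge_stretch (R : realType) n (E F : {set 'I_n * 'I_n}) (w : 'I_n * 'I_n -> R)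
  eps (D : nat) :
  simple_edges E -> 0 < eps -> eps <= 18^-1 -> spectral_sparsifier E F w eps ->
  (2 * #|E| < D ^ 2)%N -> forall a b, adj E a b -> dist_le F a b D.-1.
Proof.
move=> sE e0 e18 [sFE wpos hlo hhi] hD a b hab.
case: (pselect (dist_le F a b D.-1)) => // nd; exfalso.
pose S j z := `[< dist_le F a z j >].
pose xn z := (\sum_(j < D) (~~ S j z : nat))%N.
pose x : 'cV[R]_n := \col_z (xn z)%:R.
have xa : xn a = 0%N.
  apply: big1 => j _; suff -> : S j a by [].
  by apply/asboolP; exists [::].
have xb : xn b = D.
  transitivity (\sum_(j < D) 1)%N; last by rewrite sum_nat_const card_ord muln1.
  apply: eq_bigr => j _; suff -> : S j b = false by [].
  apply/negP => /asboolP [p [hs hp hl]]; apply: nd; exists p; split => //.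
  by apply: leq_trans hs _; have := ltn_ord j; lia.
have xadj : forall y z, adj F y z -> (xn y <= (xn z).+1)%N.
  move=> y z hyz; apply: (@sum_shift D (fun j => S j y) (fun j => S j z)) => j /asboolP [p [hs hp hl]].
  apply/asboolP; exists (rcons p y); split.
  - by rewrite size_rcons.
  - by rewrite rcons_path hp /= hl adjC.
  - by rewrite last_rcons.
have xsq : forall y z, adj F y z -> (x y 0 - x z 0)^+2 <= 1.
  move=> y z hyz; rewrite !mxE.
  have h1 : (xn y)%:R <= (xn z)%:R + 1 :> R by rewrite natr1 ler_nat xadj.
  have h2 : (xn z)%:R <= (xn y)%:R + 1 :> R by rewrite natr1 ler_nat xadj // adjC.
  move: h1 h2; set p := (xn y)%:R; set q := (xn z)%:R => h1 h2; nra.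
set W := \sum_(e in F) w e.
have hW := @weight_bound R n E F w eps sE sFE hlo.
have W0 : 0 <= W by apply: sumr_ge0 => e /wpos /ltW.
have hH : (x^T *m laplacian F w *m x) 0 0 <= W.
  rewrite qformE; apply: ler_sum => e eF.
  have he : adj F e.1 e.2 by case: e eF => e1 e2 /= eF; rewrite /adj eF.
  have := xsq _ _ he; have := wpos e eF; set s := (_ ^+ 2); move=> h1 h2; nra.
have hG : (D%:R)^+2 <= (x^T *m ulaplacian R E *m x) 0 0.
  rewrite uqformE.
  have sq0 : forall e, 0 <= (x e.1 0 - x e.2 0) ^+ 2 by move=> e; apply: sqr_ge0.
  case/orP: hab => h; rewrite (bigD1 _ h) /= !mxE xa xb.
  - by rewrite sub0r sqrrN lerDl sumr_ge0.
  - by rewrite subr0 lerDl sumr_ge0.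
have := hhi x; rewrite qformZ => h.
have hDm : (D%:R)^+2 <= 2 * #|E|%:R :> R.
  move: hG h hH hW; set Q := (x^T *m _ *m x) 0 0; set P := (x^T *m _ *m x) 0 0.
  set m := #|E|%:R; set d := (D%:R)^+2 => h1 h2 h3 h4.
  have e1 : eps <= 1/3 by apply: le_trans e18 _; rewrite ler_pdivlMr //; lra.
  have s1 : d <= (1 + eps) * W.
    apply: (le_trans h1); apply: (le_trans h2); rewrite ler_wpM2l //; lra.
  have s2 : 0 <= (2 * (1 - eps) - (1 + eps)) * W by apply: mulr_ge0 => //; lra.
  have h5 : (1 - eps) * W <= m by exact: h4.
  lra.
move: hDm; rewrite -natrX -natrM ler_nat; lia.
Qed.

Theorem theorem4p2 :
  exists (C k : nat), forall (R : realType) (n : nat)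
    (E F : {set 'I_n * 'I_n}) (w : 'I_n * 'I_n -> R) (eps : R),
    simple_edges E ->
    0 < eps -> eps <= 18^-1 ->
    spectral_sparsifier E F w eps ->
    spanner E F (C%:R * Num.sqrt (#|E|%:R) * (ln (n%:R : R)) ^+ k).
Proof.
exists 2%N, 0%N => R n E F w eps sE e0 e18 hsp.
rewrite expr0 mulr1.
have exP : exists D, (2 * #|E| < D ^ 2)%N by exists (2 * #|E|).+1; nia.
case: (ex_minnP exP) => D hD hmin.
have Dpos : (0 < D)%N by case: D hD {hmin} => //; rewrite expn0n /=; lia.
have hD1 : (D.-1 ^ 2 <= 2 * #|E|)%N.
  rewrite leqNgt; apply/negP => /hmin; lia.
have hst := @edge_stretch R n E F w eps D sE e0 e18 hsp hD.
have hdR : (D.-1)%:R <= 2 * Num.sqrt (#|E|%:R) :> R.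
  have h1 : ((D.-1)%:R)^+2 <= 2 * #|E|%:R :> R by rewrite -natrX -natrM ler_nat.
  have s0 : 0 <= Num.sqrt (#|E|%:R) :> R by apply: sqrtr_ge0.
  have s2 : (Num.sqrt (#|E|%:R))^+2 = #|E|%:R :> R by rewrite sqr_sqrtr // ler0n.
  have d0 : 0 <= (D.-1)%:R :> R by apply: ler0n.
  move: h1 s0 s2 d0; set d := (D.-1)%:R; set s := Num.sqrt _ => h1 s0 s2 d0.
  rewrite -s2 in h1; nra.
move=> u v k [p [hs hp hl]].
have [q [sq pq lq]] := @walk_lift n E F D.-1 hst p u hp.
exists (size q); split; last by exists q; split; rewrite ?lq.
have : (size q)%:R <= k%:R * (D.-1)%:R :> R.
  by rewrite -natrM ler_nat; apply: (leq_trans sq); rewrite leq_mul2r hs orbT.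
move=> h; apply: (le_trans h); rewrite mulrC ler_wpM2r //.
Qed.
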